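(* Let $N\in\mathbb{N}$ and let $u$ and $v$ be nontrivial, coprime divisors of $N$. Let $b\in\mathbb{Z}$ and $f\in\mathbb{Z}[X]$ with $f(b)=N$ such that (1) $\gcd(\mathrm{lc}(f),N)=1$, where $\mathrm{lc}(f)$ is the leading coefficient of $f$, and (2) $d:=\deg f$ is smaller than the largest prime factor of $v$. Then there exists $x\in\mathbb{Z}$ with $u\mid f(x)$ and $v\nmid f(x)$. *)

(* Defs.v *)
From mathcomp Require Import all_boot all_order all_algebra.
Set Implicit Arguments. Unset Strict Implicit. Unset Printing Implicit Defensive.

(* Main.v *)
Require Import Defs.
From mathcomp Require Import all_boot all_order all_algebra.
From Stdlib Require Import Classical.
Import GRing.Theory Num.Theory.
Local Open Scope ring_scope.

Lemma horner_sub_dvd (f : {poly int}) (x b : int) : (x - b %| f.[x] - f.[b])%Z.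
Proof.
have : root (f - f.[b]%:P) b by rewrite /root !hornerE subrr.
case/factor_theorem => q Hq.
have := congr1 (fun p => p.[x]) Hq; rewrite /= !hornerE => ->.
exact: dvdz_mull.
Qed.

Theorem lemma2p5 (N u v : nat) (b : int) (f : {poly int}) :
  (u %| N)%N -> u != 1%N -> u != N ->
  (v %| N)%N -> v != 1%N -> v != N ->
  coprime u v ->
  f.[b] = N%:Z ->
  coprimez (lead_coef f) N ->
  ((size f).-1 < max_pdiv v)%N ->
  exists x : int, (u%:Z %| f.[x])%Z /\ ~~ (v%:Z %| f.[x])%Z.
Proof.
move=> uN u1 uNN vN v1 vNN cuv fb clc hd.
have v0 : v != 0%N.
  apply/negP => /eqP v0; move: vN vNN; rewrite v0 dvd0n eq_sym => ->; done.
have v2 : (1 < v)%N by case: v v0 v1 {vN vNN cuv hd} => [|[|]].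
set p := max_pdiv v.
have pr : prime p := max_pdiv_prime v2.
have pv : (p %| v)%N := max_pdiv_dvd v.
have hu : forall t : int, (u%:Z %| f.[b + u%:Z * t])%Z.
  move=> t; have := horner_sub_dvd f (b + u%:Z * t) b.
  rewrite addrAC subrr add0r fb => H.
  have H2 := dvdz_trans (dvdz_mulr t (dvdzz u%:Z)) H.
  by rewrite -(subrK N%:Z f.[_]) rpredD // dvdzE /= absz_nat.
apply: NNPP => Hall.
have hv : forall t : int, (p%:Z %| f.[b + u%:Z * t])%Z.
  move=> t; apply: (@dvdz_trans v%:Z); first by rewrite dvdzE !absz_nat.
  apply/negPn/negP => nv; apply: Hall; exists (b + u%:Z * t); split => //.
have pch := pchar_Fp pr.
set g := map_poly (intmul (1 : 'F_p)) f.
have lcp : (lead_coef f)%:~R != 0 :> 'F_p.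
  rewrite -(dvdz_pcharf pch); apply/negP => pl.
  have : coprimez (lead_coef f) p.
    by apply: coprimez_dvdr clc; apply: dvdn_trans vN.
  rewrite coprimezE absz_nat coprime_sym prime_coprime //.
  by move: pl; rewrite dvdzE absz_nat => ->.
have sg : size g = size f by rewrite size_map_poly_id0.
have up : (u%:R : 'F_p) != 0.
  rewrite -(dvdn_pcharf pch); apply/negP => pu.
  have : (p %| gcdn u v)%N by rewrite dvdn_gcd pu pv.
  by rewrite (eqP cuv) dvdn1 => /eqP p1; move: (prime_gt1 pr); rewrite p1.
have rt : all (root g) (enum 'F_p).
  apply/allP => y _.
  pose t : 'F_p := (y - b%:~R) / u%:R.
  have ey : ((b + u%:Z * (t : nat)%:Z)%:~R : 'F_p) = y.
    rewrite intrD intrM.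
    have -> : (((t : nat)%:Z)%:~R : 'F_p) = t.
      apply: val_inj; rewrite [LHS]/= -[((t : nat)%:Z)%:~R]/((t : nat)%:R).
      rewrite val_Fp_nat // modn_small //.
      by apply: leq_trans (ltn_ord t) _; rewrite Fp_cast.
    rewrite -[(u%:Z)%:~R]/(u%:R : 'F_p).
    by rewrite /t mulrC divfK // subrKC.
  by rewrite /root -ey /g horner_map /= -(dvdz_pcharf pch) hv.
have g0 : g != 0.
  by rewrite -size_poly_eq0 sg size_poly_eq0 -lead_coef_eq0; apply: contraNneq lcp => ->.
have := max_poly_roots g0 rt (enum_uniq _).
rewrite -cardE card_Fp // sg.
move: hd; case: (size f) => [|n] /= hd; first by rewrite ltn0.
by rewrite ltnS leqNgt hd.
Qed.
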